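(* Let $L\subset\mathbb R^n$ be a regular (embedded) surface of dimension $r$, $1\le r\le n-1$, which is a closed subset of $\mathbb R^n$. If the normal (affine) planes of $L$ at distinct points of $L$ are pairwise disjoint, then $L$ is an $r$-dimensional affine plane.
   Context: The normal plane of $L$ at $p\in L$ is the affine $(n-r)$-plane through $p$ orthogonal to $T_pL$. *)

(* Defs.v *)
From Stdlib Require Import Reals.
From mathcomp Require Import all_boot.
Set Implicit Arguments. Unset Strict Implicit. Unset Printing Implicit Defensive.

Local Open Scope R_scope.

Definition vec (n : nat) := 'I_n -> R.

Definition vsum (m : nat) (f : 'I_m -> R) : R := \big[Rplus/0]_(i < m) f i.
Definition vadd n (u v : vec n) : vec n := fun j => u j + v j.
Definition vsub n (u v : vec n) : vec n := fun j => u j - v j.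
Definition vscale n (a : R) (u : vec n) : vec n := fun j => a * u j.
Definition dot n (u v : vec n) : R := vsum (fun j => u j * v j).
Definition vnorm n (u : vec n) : R := sqrt (dot u u).
Definition dist n (u v : vec n) : R := vnorm (vsub u v).
Definition ebasis n (i : 'I_n) : vec n := fun j => if j == i then 1 else 0.
Definition lincomb n m (c : 'I_m -> R) (v : 'I_m -> vec n) : vec n :=
  fun j => vsum (fun i => c i * v i j).
Definition lin_indep n m (v : 'I_m -> vec n) : Prop :=
  forall c : 'I_m -> R, (forall j, lincomb c v j = 0) -> forall i, c i = 0.

Definition is_open n (U : vec n -> Prop) : Prop :=
  forall x, U x -> exists delta, 0 < delta /\ forall y, dist x y < delta -> U y.
Definition is_closed n (L : vec n -> Prop) : Prop :=
  forall x, (forall eps, 0 < eps -> exists y, L y /\ dist x y < eps) -> L x.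

Definition cont_on n m (S : vec n -> Prop) (g : vec n -> vec m) : Prop :=
  forall x, S x -> forall eps, 0 < eps -> exists delta, 0 < delta /\
    forall y, S y -> dist x y < delta -> dist (g x) (g y) < eps.

Definition has_partial r (g : vec r -> R) (i : 'I_r) (x : vec r) (l : R) : Prop :=
  derivable_pt_lim (fun t => g (vadd x (vscale t (ebasis i)))) 0 l.

Fixpoint Ck r (k : nat) (U : vec r -> Prop) (g : vec r -> R) : Prop :=
  match k with
  | O => cont_on U (fun x (_ : 'I_1) => g x)
  | S k' => cont_on U (fun x (_ : 'I_1) => g x) /\
      exists D : 'I_r -> vec r -> R,
        (forall i x, U x -> has_partial g i x (D i x)) /\
        (forall i, Ck k' U (D i))
  end.

Definition smooth_on r n (U : vec r -> Prop) (f : vec r -> vec n) : Prop :=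
  forall k j, Ck k U (fun x => f x j).

Definition immersion_on r n (U : vec r -> Prop) (f : vec r -> vec n) : Prop :=
  forall x, U x -> exists J : 'I_r -> vec n,
    (forall i j, has_partial (fun y => f y j) i x (J i j)) /\ lin_indep J.

(* L is a regular (embedded, smooth) surface of dimension r in R^n:
   every point p of L has an open neighbourhood W in R^n such that L ∩ W is
   the homeomorphic image of an open V ⊂ R^r under a smooth immersion phi. *)
Definition regular_surface n r (L : vec n -> Prop) : Prop :=
  forall p, L p -> exists (W : vec n -> Prop) (V : vec r -> Prop)
    (phi : vec r -> vec n) (psi : vec n -> vec r),
    is_open W /\ W p /\ is_open V /\
    smooth_on V phi /\ immersion_on V phi /\
    (forall y, V y -> W (phi y) /\ L (phi y) /\ psi (phi y) = y) /\
    (forall x, L x -> W x -> V (psi x) /\ phi (psi x) = x) /\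
    cont_on (fun x => L x /\ W x) psi.

Definition tangent_vec n (L : vec n -> Prop) (p v : vec n) : Prop :=
  exists (gamma : R -> vec n) (eps : R), 0 < eps /\
    (forall t, Rabs t < eps -> L (gamma t)) /\ gamma 0 = p /\
    forall j, derivable_pt_lim (fun t => gamma t j) 0 (v j).

Definition normal_plane n (L : vec n -> Prop) (p x : vec n) : Prop :=
  forall v, tangent_vec L p v -> dot (vsub x p) v = 0.

Definition affine_plane n r (L : vec n -> Prop) : Prop :=
  exists (a : vec n) (v : 'I_r -> vec n), lin_indep v /\
    forall x, L x <-> exists c : 'I_r -> R, x = vadd a (lincomb c v).

(* Main.v *)
Require Import Defs.
From Stdlib Require Import Reals Lra FunctionalExtensionality Classical.
From mathcomp Require Import all_boot.
From HB Require Import structures.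
From mathcomp Require Import all_order all_algebra all_classical all_reals.
From mathcomp Require Import topology normedtype derive Rstruct Rstruct_topology.
Set Implicit Arguments. Unset Strict Implicit. Unset Printing Implicit Defensive.

Section EVT.
Import Order.TTheory GRing.Theory Num.Theory.
Import numFieldNormedType.Exports.
Local Open Scope classical_set_scope.
Local Open Scope ring_scope.

Lemma entry_le_norm m (v : 'rV[R]_m) i : `|v ord0 i| <= `|v|.
Proof.
have -> : `|v| = mx_norm v by []. rewrite mx_normrE.
by apply/bigmax_geP; right => /=; exists (ord0, i).
Qed.

Lemma norm_le_entries m (v : 'rV[R]_m) M : 0 <= M -> (forall i, `|v ord0 i| <= M) -> `|v| <= M.
Proof.
move=> M0 H; have -> : `|v| = mx_norm v by []. rewrite mx_normrE.
apply: bigmax_le => // -[a b] _ /=.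
by rewrite (ord1 a).
Qed.

Lemma evt_box m (K : vec m -> Prop) (f : vec m -> R) :
  (exists x, K x) ->
  (exists M, forall x, K x -> forall i, Rle (Rabs (x i)) M) ->
  (forall x, (forall e, Rlt 0 e -> exists y, K y /\ forall i, Rlt (Rabs (Rminus (x i) (y i))) e) -> K x) ->
  (forall x e, Rlt 0 e -> exists d, Rlt 0 d /\ forall y, (forall i, Rlt (Rabs (Rminus (x i) (y i))) d) -> Rlt (Rabs (Rminus (f x) (f y))) e) ->
  exists c, K c /\ forall x, K x -> Rle (f c) (f x).
Proof.
move=> [x0 Kx0] [M HM] Kcl fc.
pose A := [set v : 'rV[R]_m | K (fun i => v ord0 i)].
pose F := fun v : 'rV[R]_m => f (fun i => v ord0 i).
have A0 : A !=set0.
  exists (\row_i x0 i); rewrite /A /=.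
  by have -> : (fun i => (\row_i0 x0 i0) ord0 i) = x0 by apply: funext => i; rewrite mxE.
have Ab : bounded_set A.
  rewrite /bounded_set /= /bounded_near.
  near=> M'.
  move=> v /= Av.
  have HMM : `|M| <= M' by near: M'; apply: nbhs_pinfty_ge; rewrite realE normr_ge0.
  apply: norm_le_entries.
    exact: le_trans (normr_ge0 _) HMM.
  move=> i; apply: (le_trans _ HMM).
  apply: (le_trans _ (ler_norm M)).
  by have /RleP := HM _ Av i.
Unshelve. all: end_near.
have Acl : closed A.
  move=> p Cp; rewrite /A /=; apply: Kcl => e /RltP e0.
  have [a [Aa Ba]] := Cp _ (nbhsx_ballx p e e0).
  exists (fun i => a ord0 i); split => // i; apply/RltP.
  move: Ba; rewrite -ball_normE /= => Ba.
  apply: le_lt_trans Ba.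
  have -> : Rabs (Rminus (p ord0 i) (a ord0 i)) = `|(p - a) ord0 i| by rewrite !mxE.
  exact: entry_le_norm.
have Fc' : forall v : 'rV[R]_m, F @ v --> F v.
  move=> v.
  apply/(@cvgrPdist_lt _ R^o _ _ (nbhs_filter v)) => e /RltP e0.
  have [d [/RltP d0 Hd]] := fc (fun i => v ord0 i) e e0.
  apply/nbhs_ballP; exists d => //= t; rewrite -ball_normE /= => vt.
  apply/RltP; apply: Hd => i; apply/RltP.
  apply: le_lt_trans vt.
  have -> : Rabs (Rminus (v ord0 i) (t ord0 i)) = `|(v - t) ord0 i| by rewrite !mxE.
  exact: entry_le_norm.
have Fc : {within A, continuous F}.
  by apply: continuous_subspaceT => v; exact: Fc'.
have [c cA cmin] := EVT_min_rV A0 (bounded_closed_compact Ab Acl) Fc.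
exists (fun i => c ord0 i); split; first by move: cA; rewrite inE.
move=> x Kx.
have -> : x = (fun i => (\row_j x j) ord0 i) by apply: funext => i; rewrite mxE.
apply/RleP; apply: cmin; rewrite inE /A /=.
by have -> : (fun i => (\row_j x j) ord0 i) = x by apply: funext => i; rewrite mxE.
Qed.

End EVT.

Local Open Scope R_scope.

Lemma Rplus_assoc' : associative Rplus.
Proof. move=> x y z; lra. Qed.
Lemma Rplus_comm' : commutative Rplus.
Proof. move=> x y; lra. Qed.
Lemma Rplus_0_l' : left_id 0 Rplus.
Proof. move=> x; lra. Qed.
HB.instance Definition _ := Monoid.isComLaw.Build R 0 Rplus Rplus_assoc' Rplus_comm' Rplus_0_l'.

Lemma vsum_ext m (f g : 'I_m -> R) : (forall i, f i = g i) -> vsum f = vsum g.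
Proof. by move=> H; rewrite /vsum; apply: eq_bigr => i _; rewrite H. Qed.

Lemma vsum_rec m (f : 'I_m.+1 -> R) :
  vsum f = vsum (fun i => f (widen_ord (leqnSn m) i)) + f ord_max.
Proof. by rewrite /vsum big_ord_recr. Qed.

Lemma vsum_nil (f : 'I_0 -> R) : vsum f = 0.
Proof. by rewrite /vsum big_ord0. Qed.

Lemma vsum_add m (f g : 'I_m -> R) : vsum (fun i => f i + g i) = vsum f + vsum g.
Proof.
elim: m f g => [|m IH] f g; first by rewrite !vsum_nil; lra.
rewrite !vsum_rec IH; lra.
Qed.

Lemma vsum_scal m c (f : 'I_m -> R) : vsum (fun i => c * f i) = c * vsum f.
Proof.
elim: m f => [|m IH] f; first by rewrite !vsum_nil; lra.
rewrite !vsum_rec IH; lra.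
Qed.

Lemma vsum_opp m (f : 'I_m -> R) : vsum (fun i => - f i) = - vsum f.
Proof.
elim: m f => [|m IH] f; first by rewrite !vsum_nil; lra.
rewrite !vsum_rec IH; lra.
Qed.

Lemma vsum_sub m (f g : 'I_m -> R) : vsum (fun i => f i - g i) = vsum f - vsum g.
Proof.
elim: m f g => [|m IH] f g; first by rewrite !vsum_nil; lra.
rewrite !vsum_rec IH; lra.
Qed.

Lemma vsum_zero m : vsum (fun _ : 'I_m => 0) = 0.
Proof.
elim: m => [|m IH]; first by rewrite !vsum_nil.
rewrite !vsum_rec IH; lra.
Qed.

Lemma vsum_le m (f g : 'I_m -> R) : (forall i, f i <= g i) -> vsum f <= vsum g.
Proof.
elim: m f g => [|m IH] f g H; first by rewrite !vsum_nil; lra.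
rewrite !vsum_rec; have := IH (fun i => f (widen_ord (leqnSn m) i)) (fun i => g (widen_ord (leqnSn m) i)) (fun i => H _).
have := H ord_max; lra.
Qed.

Lemma vsum_ge0 m (f : 'I_m -> R) : (forall i, 0 <= f i) -> 0 <= vsum f.
Proof. move=> H; rewrite -(vsum_zero m); exact: vsum_le. Qed.

Lemma vsum_swap m k (F : 'I_m -> 'I_k -> R) :
  vsum (fun i => vsum (fun j => F i j)) = vsum (fun j => vsum (fun i => F i j)).
Proof.
elim: m F => [|m IH] F.
  rewrite vsum_nil; symmetry; rewrite -(vsum_zero k); apply: vsum_ext => j; exact: vsum_nil.
rewrite vsum_rec IH -vsum_add; apply: vsum_ext => j; by rewrite vsum_rec.
Qed.

Lemma vsum_delta m (i : 'I_m) (a : R) : vsum (fun j => if j == i then a else 0) = a.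
Proof.
elim: m i => [|m IH] i; first by case: i.
rewrite vsum_rec.
have [->|ne] := eqVneq i ord_max.
  rewrite -[RHS]Rplus_0_l; congr (_ + _).
  transitivity (vsum (fun _ : 'I_m => 0)); last exact: vsum_zero.
  apply: vsum_ext => j.
  case: eqP => [E|_]; last by []. have /= Ej := congr1 val E; by move: (ltn_ord j); rewrite Ej ltnn.
have im : (i < m)%N.
  have := ltn_ord i; rewrite ltnS leq_eqVlt => /orP[/eqP Hi|//].
  by case/eqP: ne; apply: val_inj.
rewrite Rplus_0_r -{2}(IH (Ordinal im)); apply: vsum_ext => j.
have -> : (widen_ord (leqnSn m) j == i) = (j == Ordinal im) by apply/eqP/eqP => E; apply: val_inj; move: E => /(congr1 val) /= ->. done.

Qed.

Lemma vsum_single_le m (f : 'I_m -> R) i : (forall j, 0 <= f j) -> f i <= vsum f.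
Proof.
move=> H; rewrite -{1}(vsum_delta i (f i)); apply: vsum_le => j.
case: eqP => [->|_]; [lra|exact: H].
Qed.

Lemma vsum_abs m (f : 'I_m -> R) : Rabs (vsum f) <= vsum (fun i => Rabs (f i)).
Proof.
elim: m f => [|m IH] f; first by rewrite !vsum_nil Rabs_R0; lra.
rewrite !vsum_rec; apply: Rle_trans (Rabs_triang _ _) _.
have := IH (fun i => f (widen_ord (leqnSn m) i)); lra.
Qed.

Definition n1 n (u : vec n) := vsum (fun i => Rabs (u i)).

Lemma dot_comm n (u v : vec n) : dot u v = dot v u.
Proof. by apply: vsum_ext => i; lra. Qed.

Lemma dot_addl n (u v w : vec n) : dot (vadd u v) w = dot u w + dot v w.
Proof. rewrite /dot -vsum_add; apply: vsum_ext => i; rewrite /vadd; lra. Qed.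

Lemma dot_subl n (u v w : vec n) : dot (vsub u v) w = dot u w - dot v w.
Proof. rewrite /dot -vsum_sub; apply: vsum_ext => i; rewrite /vsub; lra. Qed.

Lemma dot_scalel n a (u w : vec n) : dot (vscale a u) w = a * dot u w.
Proof. rewrite /dot -vsum_scal; apply: vsum_ext => i; rewrite /vscale; lra. Qed.

Lemma dot_subr n (u v w : vec n) : dot w (vsub u v) = dot w u - dot w v.
Proof. by rewrite dot_comm dot_subl !(dot_comm w). Qed.

Lemma dot_lincomb n m (c : 'I_m -> R) (v : 'I_m -> vec n) w :
  dot (lincomb c v) w = vsum (fun i => c i * dot (v i) w).
Proof.
rewrite /dot /lincomb.
rewrite (vsum_ext (g := fun j => vsum (fun i => c i * v i j * w j))); last first.
  by move=> j; rewrite Rmult_comm -vsum_scal; apply: vsum_ext => i; lra.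
rewrite vsum_swap; apply: vsum_ext => i; rewrite -vsum_scal; apply: vsum_ext => j; lra.
Qed.

Lemma dot_self_ge0 n (u : vec n) : 0 <= dot u u.
Proof. apply: vsum_ge0 => i; nra. Qed.

Lemma coord_sq_le n (u : vec n) i : u i * u i <= dot u u.
Proof. by apply: (vsum_single_le (f := fun j => u j * u j)) => j; nra. Qed.

Lemma dot_self_eq0 n (u : vec n) : dot u u = 0 -> u = (fun _ => 0).
Proof.
move=> H; apply: functional_extensionality => i.
have := coord_sq_le u i; rewrite H => Hi; nra.
Qed.

Lemma vsub_eq0 n (u v : vec n) : dot (vsub u v) (vsub u v) = 0 -> u = v.
Proof.
move/dot_self_eq0 => H; apply: functional_extensionality => i.
have := congr1 (fun f => f i) H; rewrite /vsub /=; lra.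
Qed.

Lemma abs_le_n1 n (u : vec n) i : Rabs (u i) <= n1 u.
Proof. by apply: (vsum_single_le (f := fun j => Rabs (u j))) => j; apply: Rabs_pos. Qed.

Lemma n1_ge0 n (u : vec n) : 0 <= n1 u.
Proof. apply: vsum_ge0 => i; exact: Rabs_pos. Qed.

Lemma dot_le_n1sq n (u : vec n) : dot u u <= n1 u * n1 u.
Proof.
rewrite /dot /n1 -vsum_scal; apply: vsum_le => i.
have := abs_le_n1 u i; have := Rabs_pos (u i); rewrite /n1.
have -> : u i * u i = Rabs (u i) * Rabs (u i) by rewrite -Rabs_mult Rabs_right; nra.
nra.
Qed.

Lemma dot_abs_le n (u w : vec n) M : (forall i, Rabs (u i) <= M) -> Rabs (dot u w) <= M * n1 w.
Proof.
move=> H; apply: Rle_trans (vsum_abs _) _.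
rewrite /n1 -vsum_scal; apply: vsum_le => i; rewrite Rabs_mult.
have := H i; have := Rabs_pos (w i); have := Rabs_pos (u i); nra.
Qed.

Lemma dist_sq n (x y : vec n) : Defs.dist x y * Defs.dist x y = dot (vsub x y) (vsub x y).
Proof. rewrite /Defs.dist /vnorm sqrt_sqrt //; exact: dot_self_ge0. Qed.

Lemma dist_ge0 n (x y : vec n) : 0 <= Defs.dist x y.
Proof. exact: sqrt_pos. Qed.

Lemma dist_coord n (x y : vec n) i : Rabs (x i - y i) <= Defs.dist x y.
Proof.
have H0 := dist_ge0 x y.
rewrite -[X in _ <= X]Rabs_right; last lra.
apply: Rsqr_le_abs_0; rewrite /Rsqr dist_sq; exact: (coord_sq_le (vsub x y) i).
Qed.

Lemma dist_le_n1 n (x y : vec n) : Defs.dist x y <= n1 (vsub x y).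
Proof.
apply: Rsqr_incr_0_var; last exact: n1_ge0.
rewrite /Rsqr dist_sq; exact: dot_le_n1sq.
Qed.

Lemma vsum_const n e : vsum (fun _ : 'I_n => e) = INR n * e.
Proof.
elim: n => [|n IH]; first by rewrite vsum_nil /=; lra.
by rewrite vsum_rec IH S_INR; lra.
Qed.

Lemma n1_box n (u : vec n) e : (forall i, Rabs (u i) <= e) -> n1 u <= INR n * e.
Proof.
move=> H; apply: Rle_trans (vsum_le (g := fun _ => e) H) _.
rewrite vsum_const; lra.
Qed.

Lemma dist_box n (x y : vec n) e : 0 <= e -> (forall i, Rabs (x i - y i) <= e) -> Defs.dist x y <= INR n * e.
Proof. move=> e0 H; apply: Rle_trans (dist_le_n1 _ _) _; apply: n1_box => i; exact: H. Qed.

Lemma dist_sym n (x y : vec n) : Defs.dist x y = Defs.dist y x.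
Proof. rewrite /Defs.dist /vnorm; congr sqrt; apply: vsum_ext => i; rewrite /vsub; lra. Qed.

Lemma ebasis_mul n (i : 'I_n) a k : ebasis i k * a = if k == i then a else 0.
Proof. rewrite /ebasis; case: eqP => _; lra. Qed.

Lemma lincomb_add_basis n m (c : 'I_m -> R) (J : 'I_m -> vec n) t i :
  lincomb (fun k => c k + t * ebasis i k) J = vadd (lincomb c J) (vscale t (J i)).
Proof.
apply: functional_extensionality => j; rewrite /lincomb /vadd /vscale.
rewrite (vsum_ext (g := fun k => c k * J k j + t * (ebasis i k * J k j))); last by move=> k; lra.
rewrite vsum_add vsum_scal; congr (_ + t * _).
rewrite (vsum_ext (g := fun k => if k == i then J k j else 0)); last by move=> k; rewrite ebasis_mul.
rewrite -(vsum_delta i (J i j)); apply: vsum_ext => k; by case: eqP => [->|].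
Qed.

Lemma dist_basis n (x : vec n) t i : Defs.dist x (vadd x (vscale t (ebasis i))) = Rabs t.
Proof.
rewrite /Defs.dist /vnorm.
have -> : dot (vsub x (vadd x (vscale t (ebasis i)))) (vsub x (vadd x (vscale t (ebasis i)))) = t * t.
  rewrite -(vsum_delta i (t * t)); apply: vsum_ext => k.
  rewrite /vsub /vadd /vscale /ebasis; case: eqP => _; lra.
exact: sqrt_Rsqr_abs.
Qed.

Lemma dpl_ext f g x l : (forall t, f t = g t) -> derivable_pt_lim f x l -> derivable_pt_lim g x l.
Proof. by move=> H; have -> : g = f by apply: functional_extensionality => t; rewrite H. Qed.

Lemma dpl_vsum m (F : 'I_m -> R -> R) (l : 'I_m -> R) x :
  (forall i, derivable_pt_lim (F i) x (l i)) ->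
  derivable_pt_lim (fun t => vsum (fun i => F i t)) x (vsum l).
Proof.
elim: m F l => [|m IH] F l H.
  rewrite vsum_nil; apply: (dpl_ext (f := fct_cte 0)); last exact: derivable_pt_lim_const.
  by move=> t; rewrite vsum_nil.
rewrite vsum_rec.
apply: (dpl_ext (f := (fun t => vsum (fun i => F (widen_ord (leqnSn m) i) t)) + F ord_max)%F).
  by move=> t; rewrite vsum_rec.
apply: derivable_pt_lim_plus; last exact: H.
by apply: (IH (fun i => F (widen_ord (leqnSn m) i))) => i.
Qed.

Lemma dpl_scal f c x l : derivable_pt_lim f x l -> derivable_pt_lim (fun t => c * f t) x (c * l).
Proof. move=> H; exact: (derivable_pt_lim_scal f c x l H). Qed.

Lemma dpl_dot n (gamma : R -> vec n) (v w : vec n) x :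
  (forall j, derivable_pt_lim (fun t => gamma t j) x (v j)) ->
  derivable_pt_lim (fun t => dot (gamma t) w) x (dot v w).
Proof.
move=> H; rewrite /dot.
apply: (dpl_vsum (F := fun j t => gamma t j * w j)) => j.
apply: (dpl_ext (f := fun t => w j * gamma t j)); first by move=> t; lra.
rewrite Rmult_comm; exact: dpl_scal.
Qed.

Lemma dpl_bound f l K d : derivable_pt_lim f 0 l -> 0 < d ->
  (forall t, Rabs t < d -> t <> 0 -> Rabs (f t - f 0) <= K * Rabs t) -> Rabs l <= K.
Proof.
move=> Hl d0 HK; apply: Rnot_lt_le => Hlt.
have e0 : 0 < Rabs l - K.
  lra.
have [del Hdel] := Hl (Rabs l - K) e0.
pose h := Rmin del d / 2.
have Hm : 0 < Rmin del d by apply: Rmin_glb_lt; [exact: cond_pos|lra].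
have hpos : 0 < h by rewrite /h; lra.
have hdel : h < del by rewrite /h; have := Rmin_l del d; lra.
have hd : h < d by rewrite /h; have := Rmin_r del d; lra.
have := Hdel h ltac:(lra) ltac:(rewrite Rabs_right; lra).
have := HK h ltac:(rewrite Rabs_right; lra) ltac:(lra).
rewrite Rplus_0_l (Rabs_right h); last lra.
move=> Hb Hc.
have Hq : Rabs ((f h - f 0) / h) <= K.
  rewrite /Rdiv Rabs_mult Rabs_inv (Rabs_right h); last lra.
  apply: (Rmult_le_reg_r h); first lra.
  rewrite Rmult_assoc Rinv_l; lra.
have := Rabs_triang_inv l ((f h - f 0) / h).
have := Rabs_minus_sym ((f h - f 0) / h) l.
lra.
Qed.

Lemma dpl_min f l d : derivable_pt_lim f 0 l -> 0 < d ->
  (forall t, Rabs t < d -> f 0 <= f t) -> l = 0.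
Proof.
move=> Hl d0 H.
have := deriv_minimum f (- d) d 0 (exist _ l Hl) ltac:(lra) ltac:(lra).
rewrite /derive_pt /=; apply => x H1 H2; apply: H; apply: Rabs_def1; lra.
Qed.

Lemma nearest_normal n (L : vec n -> Prop) x q :
  L q -> (forall y, L y -> dot (vsub x q) (vsub x q) <= dot (vsub x y) (vsub x y)) ->
  normal_plane L q x.
Proof.
move=> Lq Hmin v [gamma [eps [e0 [Lg [g0 Hg]]]]].
pose f t := dot (vsub x (gamma t)) (vsub x (gamma t)).
have Hf : derivable_pt_lim f 0 (dot (vsub x q) (vscale (-2) v)).
  rewrite /f /dot.
  apply: (dpl_vsum (F := fun j t => vsub x (gamma t) j * vsub x (gamma t) j)) => j.
  rewrite /vsub /vscale.
  have Hj : derivable_pt_lim (fun t => x j - gamma t j) 0 (- v j).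
    apply: (dpl_ext (f := (fct_cte (x j) - (fun t => gamma t j))%F)); first by [].
    rewrite -[- v j]Rminus_0_l; apply: derivable_pt_lim_minus; [exact: derivable_pt_lim_const|exact: Hg].
  have := derivable_pt_lim_mult _ _ _ _ _ Hj Hj.
  rewrite g0 => Hm.
  have -> : (x j - q j) * (-2 * v j) = - v j * (x j - q j) + (x j - q j) * - v j by ring.
  exact: Hm.
have Hz : dot (vsub x q) (vscale (-2) v) = 0.
  apply: (dpl_min Hf e0) => t Ht; rewrite /f g0; apply: Hmin; exact: Lg.
move: Hz; rewrite dot_comm dot_scalel dot_comm; lra.
Qed.

Lemma sqd_cont n (a u : vec n) e : 0 < e -> exists d, 0 < d /\ forall w,
  (forall i, Rabs (u i - w i) < d) ->
  Rabs (dot (vsub a u) (vsub a u) - dot (vsub a w) (vsub a w)) < e.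
Proof.
move=> e0.
pose C := 2 * n1 (vsub a u) + INR n + 1.
have C0 : 0 < C by rewrite /C; have := n1_ge0 (vsub a u); have := pos_INR n; lra.
have dpos : 0 < Rmin 1 (e / C).
  apply: Rmin_glb_lt; first lra. apply: Rdiv_lt_0_compat; lra.
exists (Rmin 1 (e / C)); split => // w Hw.
have d1 := Rmin_l 1 (e / C); have d2 := Rmin_r 1 (e / C).
set d := Rmin 1 (e / C) in Hw d1 d2 dpos *.
have -> : dot (vsub a u) (vsub a u) - dot (vsub a w) (vsub a w) =
  vsum (fun j => (w j - u j) * (2 * (a j - u j) + (u j - w j))).
  rewrite /dot -vsum_sub; apply: vsum_ext => j; rewrite /vsub; ring.
apply: Rle_lt_trans (vsum_abs _) _.
apply: Rle_lt_trans (vsum_le (g := fun j => d * (2 * Rabs (vsub a u j) + 1)) _) _.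
  move=> j; rewrite Rabs_mult /vsub.
  have h1 := Hw j; rewrite Rabs_minus_sym in h1.
  have h2 := Rabs_triang (2 * (a j - u j)) (u j - w j).
  rewrite Rabs_mult (Rabs_right 2) in h2; last lra.
  have h3 := Rabs_pos (w j - u j).
  have h4 := Rabs_pos (2 * (a j - u j) + (u j - w j)).
  have h5 := Hw j.
  nra.
rewrite vsum_scal vsum_add vsum_scal vsum_const.
rewrite -/(n1 (vsub a u)).
have : d * C <= e.
  have := Rmult_le_compat_r C _ _ (Rlt_le _ _ C0) d2.
  by rewrite /Rdiv Rmult_assoc Rinv_l; lra.
rewrite /C; lra.
Qed.

Lemma le_of_lt_eps a b : (forall e, 0 < e -> a < b + e) -> a <= b.
Proof.
move=> H; apply: Rnot_lt_le => Hlt; have := H ((a - b) / 2) ltac:(lra); lra.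
Qed.

Lemma nearest n (L : vec n -> Prop) x : (exists p, L p) -> is_closed L ->
  exists q, L q /\ forall y, L y -> dot (vsub x q) (vsub x q) <= dot (vsub x y) (vsub x y).
Proof.
move=> [p Lp] Lcl.
pose M := dot (vsub x p) (vsub x p) + 1.
have M1 : 1 <= M by rewrite /M; have := dot_self_ge0 (vsub x p); lra.
pose K := fun y : vec n => L y /\ forall i, Rabs (y i - x i) <= M.
have Kp : K p.
  split => // i.
  have H := coord_sq_le (vsub x p) i.
  have HM : M = dot (vsub x p) (vsub x p) + 1 by [].
  change (vsub x p i) with (x i - p i) in H.
  rewrite Rabs_minus_sym; apply: Rsqr_incr_0_var; last lra.
  rewrite -Rsqr_abs /Rsqr; nra.
have [c [[Lc Kc] Hc]] : exists c, K c /\ forall y, K y -> dot (vsub x c) (vsub x c) <= dot (vsub x y) (vsub x y).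
  apply: evt_box.
  - by exists p.
  - exists (M + n1 x) => y [_ Hy] i.
    have := Hy i; have := abs_le_n1 x i.
    have := Rabs_triang (y i - x i) (x i); rewrite /Rminus Rplus_assoc Rplus_opp_l Rplus_0_r; lra.
  - move=> z Hz; split.
      apply: Lcl => eps eps0.
      have [y [[Ly _] Hy]] := Hz (eps / (INR n + 1)) ltac:(apply: Rdiv_lt_0_compat; have := pos_INR n; lra).
      exists y; split => //.
      have := dist_box (x := z) (y := y) (e := eps / (INR n + 1)) ltac:(apply: Rlt_le; apply: Rdiv_lt_0_compat; have := pos_INR n; lra) (fun i => Rlt_le _ _ (Hy i)).
      have : INR n * (eps / (INR n + 1)) < eps.
        have Hn := pos_INR n.
        rewrite /Rdiv -Rmult_assoc; apply: (Rmult_lt_reg_r (INR n + 1)); first lra.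
        rewrite Rmult_assoc Rinv_l; lra.
      lra.
    move=> i; apply: le_of_lt_eps => e e0.
    have [y [[_ Hy1] Hy2]] := Hz e e0.
    have := Hy1 i; have := Hy2 i.
    have := Rabs_triang (z i - y i) (y i - x i).
    have -> : z i - y i + (y i - x i) = z i - x i by ring.
    lra.
  - move=> z e e0; have [d [d0 Hd]] := sqd_cont x z e0; exists d; split => // w Hw; exact: Hd.
exists c; split => // y Ly.
case: (Classical_Prop.classic (forall i, Rabs (y i - x i) <= M)) => [Hy|Hy]; first by apply: Hc.
have [i Hi] := Classical_Pred_Type.not_all_ex_not _ _ Hy.
have := Hc p Kp.
have := coord_sq_le (vsub x y) i.
change (vsub x y i) with (x i - y i).
have HM : M = dot (vsub x p) (vsub x p) + 1 by [].
have Hi' : M < Rabs (y i - x i) by apply: Rnot_le_lt.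
have A : Rabs (y i - x i) * Rabs (y i - x i) = (x i - y i) * (x i - y i).
  rewrite -Rabs_mult Rabs_right; [ring | apply: Rle_ge; apply: Rle_0_sqr].
have : M * M < (x i - y i) * (x i - y i) by rewrite -A; nra.
nra.
Qed.

Lemma dot_add_self n (a b : vec n) :
  dot (vadd a b) (vadd a b) = dot a a + 2 * dot a b + dot b b.
Proof.
rewrite /dot -vsum_scal -!vsum_add; apply: vsum_ext => j; rewrite /vadd; ring.
Qed.

Lemma dot_scale_self n t (a : vec n) : dot (vscale t a) (vscale t a) = t * t * dot a a.
Proof. rewrite /dot -vsum_scal; apply: vsum_ext => j; rewrite /vscale; ring. Qed.

Lemma dot_scaler n a (u w : vec n) : dot w (vscale a u) = a * dot w u.
Proof. by rewrite dot_comm dot_scalel dot_comm. Qed.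

Definition disjoint_normals n (L : vec n -> Prop) :=
  forall p q, L p -> L q -> p <> q -> ~ (exists x, normal_plane L p x /\ normal_plane L q x).

Lemma normal_flat n (L : vec n -> Prop) : is_closed L -> (exists p, L p) -> disjoint_normals L ->
  forall q u, L q -> (forall v, tangent_vec L q v -> dot u v = 0) ->
  forall y, L y -> dot (vsub y q) u = 0.
Proof.
move=> Lcl Lne Hd q u Lq Hu y Ly.
apply: Classical_Prop.NNPP => Hs.
set s := dot (vsub y q) u in Hs.
pose u' := vscale s u.
have Hu' : forall v, tangent_vec L q v -> dot u' v = 0.
  by move=> v Hv; rewrite /u' dot_scalel Hu //; ring.
have s'pos : 0 < dot (vsub y q) u'.
  rewrite /u' dot_scaler -/s; have : s <> 0 by []; move=> H; have := Rsqr_pos_lt s H; rewrite /Rsqr; lra.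
set s' := dot (vsub y q) u' in s'pos.
set D := dot (vsub y q) (vsub y q).
have D0 : 0 <= D by apply: dot_self_ge0.
pose t := (D + 1) / (2 * s').
have t0 : 0 < t by apply: Rdiv_lt_0_compat; lra.
have tD : D < 2 * t * s'.
  have -> : 2 * t * s' = D + 1 by rewrite /t; field; lra.
  lra.
pose x := vadd q (vscale t u').
have Exq : vsub x q = vscale t u'.
  by apply: functional_extensionality => j; rewrite /x /vsub /vadd /vscale; ring.
have Exy : vsub x y = vadd (vscale (-1) (vsub y q)) (vscale t u').
  by apply: functional_extensionality => j; rewrite /x /vsub /vadd /vscale; ring.
have Hlt : dot (vsub x y) (vsub x y) < dot (vsub x q) (vsub x q).
  rewrite Exy Exq dot_add_self !dot_scale_self dot_scalel dot_scaler -/s' -/D.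
  have : 0 < t * s' by apply: Rmult_lt_0_compat.
  nra.
have [q2 [Lq2 Hq2]] := nearest x Lne Lcl.
have Nq2 : normal_plane L q2 x by exact: nearest_normal.
have Nq : normal_plane L q x.
  by move=> v Hv; rewrite Exq dot_scalel Hu' //; ring.
apply: (Hd q2 q Lq2 Lq); last by exists x.
move=> E; subst q2.
have := Hq2 y Ly; lra.
Qed.

Lemma fin_min m (P : 'I_m -> R -> Prop) :
  (forall i d d', 0 < d' <= d -> P i d -> P i d') ->
  (forall i, exists d, 0 < d /\ P i d) -> exists d, 0 < d /\ forall i, P i d.
Proof.
elim: m P => [|m IH] P Hm Hex; first by exists 1; split; [lra|case].
have [d1 [d10 H1]] := IH (fun i => P (widen_ord (leqnSn m) i)) (fun i => Hm _) (fun i => Hex _).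
have [d2 [d20 H2]] := Hex ord_max.
exists (Rmin d1 d2); split; first by apply: Rmin_glb_lt.
move=> i.
have Hmin1 := Rmin_l d1 d2; have Hmin2 := Rmin_r d1 d2.
have Hpos : 0 < Rmin d1 d2 by apply: Rmin_glb_lt.
have [E|ne] := eqVneq i ord_max.
  by rewrite E; apply: (Hm _ d2) => //; lra.
have im : (i < m)%N.
  have := ltn_ord i; rewrite ltnS leq_eqVlt => /orP[/eqP Hi|//].
  by case/eqP: ne; apply: val_inj.
have -> : i = widen_ord (leqnSn m) (Ordinal im) by apply: val_inj.
apply: (Hm _ d1); [lra|exact: H1].
Qed.

Lemma vsum_telescope (F : nat -> R) m :
  vsum (fun k : 'I_m => F k.+1 - F k) = F m - F 0%N.
Proof.
elim: m => [|m IH]; first by rewrite vsum_nil; lra.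
rewrite vsum_rec /=; rewrite IH; lra.
Qed.

Lemma dpl_shift f s l :
  derivable_pt_lim (fun t => f (s + t)) 0 l -> derivable_pt_lim f s l.
Proof.
move=> H eps e0; have [del Hd] := H eps e0; exists del => h h0 hd.
have := Hd h h0 hd; by rewrite !Rplus_0_l Rplus_0_r.
Qed.

Lemma vadd_scale_add r (z : vec r) s t e :
  vadd (vadd z (vscale s e)) (vscale t e) = vadd z (vscale (s + t) e).
Proof. apply: functional_extensionality => j; rewrite /vadd /vscale; ring. Qed.

Lemma vadd_scale0 r (z e : vec r) : vadd z (vscale 0 e) = z.
Proof. apply: functional_extensionality => j; rewrite /vadd /vscale; ring. Qed.

Lemma dist_vec1 (a b : R) : Rabs (a - b) <= Defs.dist (fun _ : 'I_1 => a) (fun _ : 'I_1 => b).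
Proof. exact: (dist_coord (fun _ : 'I_1 => a) (fun _ : 'I_1 => b) ord0). Qed.

Lemma mv_step r (V : vec r -> Prop) (g : vec r -> R) (D : 'I_r -> vec r -> R) (z : vec r) k h c eps :
  (forall i x, V x -> has_partial g i x (D i x)) ->
  (forall s, Rabs s <= Rabs h -> V (vadd z (vscale s (ebasis k))) /\
       Rabs (D k (vadd z (vscale s (ebasis k))) - c) <= eps) ->
  Rabs (g (vadd z (vscale h (ebasis k))) - g z - h * c) <= eps * Rabs h.
Proof.
move=> Hp Hs.
pose phi s := g (vadd z (vscale s (ebasis k))).
have Hd : forall s, Rabs s <= Rabs h -> derivable_pt_lim phi s (D k (vadd z (vscale s (ebasis k)))).
  move=> s Hsh; apply: dpl_shift.
  have := Hp k _ (proj1 (Hs s Hsh)); rewrite /has_partial /phi.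
  apply: dpl_ext => t; by rewrite vadd_scale_add.
have phi0 : phi 0 = g z by rewrite /phi vadd_scale0.
rewrite -phi0 -/(phi h).
have [h0|hn] := Req_dec h 0.
  rewrite h0 Rabs_R0; have -> : phi 0 - phi 0 - 0 * c = 0 by ring. rewrite Rabs_R0; lra.
have [hp|hneg] := Rlt_or_le 0 h.
  have [x [Ex Hx]] := MVT_cor2 phi (fun s => D k (vadd z (vscale s (ebasis k)))) 0 h hp
    ltac:(move=> x Hx; apply: Hd; rewrite !Rabs_right; lra).
  rewrite Ex.
  have := proj2 (Hs x ltac:(rewrite !Rabs_right; lra)).
  have -> : D k (vadd z (vscale x (ebasis k))) * (h - 0) - h * c =
    (D k (vadd z (vscale x (ebasis k))) - c) * h by ring.
  rewrite Rabs_mult => H; apply: Rmult_le_compat_r => //; exact: Rabs_pos.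
have hlt : h < 0 by lra.
have [x [Ex Hx]] := MVT_cor2 phi (fun s => D k (vadd z (vscale s (ebasis k)))) h 0 hlt
  ltac:(move=> x Hx; apply: Hd; rewrite (Rabs_left h) //; rewrite /Rabs; case: Rcase_abs; lra).
have := proj2 (Hs x ltac:(rewrite (Rabs_left h) //; rewrite /Rabs; case: Rcase_abs; lra)).
have -> : phi h - phi 0 - h * c = - (phi 0 - phi h) - h * c by ring.
rewrite Ex.
have -> : - (D k (vadd z (vscale x (ebasis k))) * (0 - h)) - h * c =
  (D k (vadd z (vscale x (ebasis k))) - c) * h by ring.
rewrite Rabs_mult => H; apply: Rmult_le_compat_r => //; exact: Rabs_pos.
Qed.

Lemma taylor1 r (V : vec r -> Prop) (g : vec r -> R) (D : 'I_r -> vec r -> R) y0 :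
  is_open V -> V y0 -> (forall i x, V x -> has_partial g i x (D i x)) ->
  (forall i, cont_on V (fun x (_ : 'I_1) => D i x)) ->
  forall eps, 0 < eps -> exists del, 0 < del /\ forall y, (forall i, Rabs (y i - y0 i) < del) ->
  Rabs (g y - g y0 - vsum (fun i => (y i - y0 i) * D i y0)) <= eps * n1 (vsub y y0).
Proof.
move=> Vo Vy0 Hp Hc eps e0.
have [dV [dV0 HV]] := Vo y0 Vy0.
have [dC [dC0 HC]] : exists dC, 0 < dC /\ forall i z, V z -> Defs.dist y0 z < dC -> Rabs (D i y0 - D i z) < eps.
  apply: (fin_min (P := fun i d => forall z, V z -> Defs.dist y0 z < d -> Rabs (D i y0 - D i z) < eps)).
    move=> i d d' Hd' H z Vz Hz; apply: H => //; lra.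
  move=> i; have [d [d0 Hd]] := Hc i y0 Vy0 eps e0.
  exists d; split => // z Vz Hz; apply: Rle_lt_trans (dist_vec1 _ _) _; exact: Hd.
have Hm0 : 0 < Rmin dV dC by apply: Rmin_glb_lt.
have Hn := pos_INR r.
pose del := Rmin dV dC / (INR r + 1).
have del0 : 0 < del by apply: Rdiv_lt_0_compat; lra.
have Hdel : INR r * del < Rmin dV dC.
  rewrite /del /Rdiv -Rmult_assoc; apply: (Rmult_lt_reg_r (INR r + 1)); first lra.
  rewrite Rmult_assoc Rinv_l; lra.
exists del; split => // y Hy.
have Hbox : forall z, (forall i, Rabs (z i - y0 i) < del) -> V z /\ forall i, Rabs (D i y0 - D i z) < eps.
  move=> z Hz.
  have Hdz : Defs.dist y0 z < Rmin dV dC.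
    apply: Rle_lt_trans Hdel; apply: dist_box; first lra.
    move=> i; rewrite Rabs_minus_sym; apply: Rlt_le; exact: Hz.
  have h1 := Rmin_l dV dC; have h2 := Rmin_r dV dC.
  have Vz : V z by apply: HV; lra.
  split => // i; apply: HC => //; lra.
pose P (k : nat) : vec r := fun i => if (i < k)%N then y i else y0 i.
have P0 : P 0%N = y0 by apply: functional_extensionality => i.
have Pr : P r = y by apply: functional_extensionality => i; rewrite /P ltn_ord.
have Pstep : forall k : 'I_r, P k.+1 = vadd (P k) (vscale (y k - y0 k) (ebasis k)).
  move=> k; apply: functional_extensionality => i; rewrite /P /vadd /vscale /ebasis ltnS leq_eqVlt.
  have [E|ne] := eqVneq i k.
    rewrite E eqxx ltnn /=; ring.
  have -> : (nat_of_ord i == nat_of_ord k) = false by apply/negbTE; apply: contra ne => /eqP/val_inj ->.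
  rewrite /=; ring.
have Hstep : forall k : 'I_r, Rabs (g (P k.+1) - g (P k) - (y k - y0 k) * D k y0) <= eps * Rabs (y k - y0 k).
  move=> k; rewrite Pstep.
  apply: (mv_step (V := V) Hp) => s Hs.
  have Hz' : forall i, Rabs (vadd (P k) (vscale s (ebasis k)) i - y0 i) < del.
    move=> i; rewrite /vadd /vscale /ebasis /P.
    have [E|ne] := eqVneq i k.
      rewrite E ltnn; have -> : y0 k + s * 1 - y0 k = s by ring. have := Hy k; lra.
    have -> : (if (i < k)%N then y i else y0 i) + s * 0 - y0 i = (if (i < k)%N then y i - y0 i else 0) by case: ifP => _; ring.
    case: ifP => _; first exact: Hy. rewrite Rabs_R0; exact: del0.
  have [Vz Hz] := Hbox _ Hz'.
  split => //; rewrite Rabs_minus_sym; apply: Rlt_le; exact: Hz.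
have -> : g y - g y0 - vsum (fun i => (y i - y0 i) * D i y0) =
  vsum (fun k : 'I_r => g (P k.+1) - g (P k) - (y k - y0 k) * D k y0).
  rewrite vsum_sub.
  have := vsum_telescope (fun k => g (P k)) r; rewrite /= Pr P0 => ->.
  by [].
apply: Rle_trans (vsum_abs _) _.
rewrite /n1 -vsum_scal; apply: vsum_le => k; exact: Hstep.
Qed.

Definition CJ n r (J : 'I_r -> vec n) := vsum (fun j => vsum (fun i => Rabs (J i j))).

Lemma CJ_ge0 n r (J : 'I_r -> vec n) : 0 <= CJ J.
Proof. apply: vsum_ge0 => j; apply: vsum_ge0 => i; exact: Rabs_pos. Qed.

Lemma lc_coord_bound n r (J : 'I_r -> vec n) c c' d : 0 <= d -> (forall i, Rabs (c i - c' i) <= d) ->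
  forall j, Rabs (lincomb c J j - lincomb c' J j) <= d * CJ J.
Proof.
move=> d0 H j.
have -> : lincomb c J j - lincomb c' J j = vsum (fun i => (c i - c' i) * J i j).
  rewrite /lincomb -vsum_sub; apply: vsum_ext => i; ring.
apply: Rle_trans (vsum_abs _) _.
apply: Rle_trans (vsum_le (g := fun i => d * Rabs (J i j)) _) _.
  move=> i; rewrite Rabs_mult; apply: Rmult_le_compat_r; [exact: Rabs_pos|exact: H].
rewrite vsum_scal; apply: Rmult_le_compat_l => //.
apply: (vsum_single_le (f := fun j => vsum (fun i => Rabs (J i j)))) => k.
apply: vsum_ge0 => i; exact: Rabs_pos.
Qed.

Lemma n1_diff n (a b : vec n) : Rabs (n1 a - n1 b) <= n1 (vsub a b).
Proof.
rewrite /n1 -vsum_sub; apply: Rle_trans (vsum_abs _) _; apply: vsum_le => j.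
rewrite /vsub; exact: Rabs_triang_inv2.
Qed.

Lemma lincomb_scale n r (J : 'I_r -> vec n) a c :
  lincomb (fun i => a * c i) J = vscale a (lincomb c J).
Proof.
apply: functional_extensionality => j; rewrite /lincomb /vscale -vsum_scal.
apply: vsum_ext => i; ring.
Qed.

Lemma lincomb_zero n r (J : 'I_r -> vec n) : lincomb (fun _ => 0) J = (fun _ => 0).
Proof.
apply: functional_extensionality => j; rewrite /lincomb; transitivity (vsum (fun _ : 'I_r => 0)); last exact: vsum_zero.
apply: vsum_ext => i; ring.
Qed.

Lemma n1_scale n a (u : vec n) : n1 (vscale a u) = Rabs a * n1 u.
Proof. rewrite /n1 -vsum_scal; apply: vsum_ext => j; rewrite /vscale Rabs_mult //. Qed.

Lemma vsum_eq0 m (f : 'I_m -> R) : (forall i, 0 <= f i) -> vsum f = 0 -> forall i, f i = 0.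
Proof. move=> H0 H i; have := vsum_single_le i H0; have := H0 i; lra. Qed.

Lemma lc_lower n r (J : 'I_r -> vec n) : (0 < r)%N -> lin_indep J ->
  exists c0, 0 < c0 /\ forall h, c0 * n1 h <= n1 (lincomb h J).
Proof.
move=> r0 LI.
have Hn := pos_INR n; have Hr := pos_INR r; have HC := CJ_ge0 J.
have [hm [Khm Hhm]] : exists hm, n1 hm = 1 /\ forall h, n1 h = 1 -> n1 (lincomb hm J) <= n1 (lincomb h J).
  apply: (@evt_box _ (fun h => n1 h = 1) (fun h => n1 (lincomb h J))).
  - exists (ebasis (Ordinal r0)); rewrite /n1 -(vsum_delta (Ordinal r0) 1); apply: vsum_ext => j.
    rewrite /ebasis; case: eqP => _; [exact: Rabs_R1|exact: Rabs_R0].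
  - by exists 1 => x Hx i; rewrite -Hx; exact: abs_le_n1.
  - move=> z Hz.
    suff : Rabs (n1 z - 1) <= 0 by move=> H; have := Rabs_pos (n1 z - 1); move: H; rewrite /Rabs; case: Rcase_abs; lra.
    apply: le_of_lt_eps => e e0.
    have [y [Ky Hy]] := Hz (e / (INR r + 1)) ltac:(apply: Rdiv_lt_0_compat; lra).
    rewrite -Ky; apply: Rle_lt_trans (n1_diff _ _) _.
    apply: Rle_lt_trans (n1_box (e := e / (INR r + 1)) _) _.
      by move=> i; apply: Rlt_le; exact: Hy.
    rewrite /Rdiv -Rmult_assoc; apply: (Rmult_lt_reg_r (INR r + 1)); first lra.
    rewrite Rmult_assoc Rinv_l; lra.
  - move=> x e e0.
    pose d := e / (INR n * CJ J + 1).
    have d0 : 0 < d by apply: Rdiv_lt_0_compat; nra.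
    exists d; split => // y Hy.
    apply: Rle_lt_trans (n1_diff _ _) _.
    apply: Rle_lt_trans (n1_box (e := d * CJ J) _) _.
      move=> j; apply: (@lc_coord_bound _ _ J x y d); [lra|move=> i; apply: Rlt_le; exact: Hy].
    have : INR n * (d * CJ J) < e.
      have -> : INR n * (d * CJ J) = e * (INR n * CJ J) / (INR n * CJ J + 1) by rewrite /d; field; nra.
      apply: (Rmult_lt_reg_r (INR n * CJ J + 1)); first nra.
      rewrite /Rdiv Rmult_assoc Rinv_l; nra.
    lra.
exists (n1 (lincomb hm J)); split.
  have := n1_ge0 (lincomb hm J); case => // H0.
  exfalso.
  have Hz : forall j, lincomb hm J j = 0.
    move=> j; have := vsum_eq0 (f := fun j => Rabs (lincomb hm J j)) (fun j => Rabs_pos _) (esym H0) j.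
    move=> Ha; apply: Classical_Prop.NNPP => Hne; exact: (Rabs_no_R0 _ Hne Ha).
  have := LI hm Hz => Hh.
  have : n1 hm = 0.
    rewrite /n1; transitivity (vsum (fun _ : 'I_r => 0)); last exact: vsum_zero.
    by apply: vsum_ext => i; rewrite Hh Rabs_R0.
  lra.
move=> h.
have [h0|hn0] := Req_dec (n1 h) 0.
  rewrite h0 Rmult_0_r; exact: n1_ge0.
have hpos : 0 < n1 h by have := n1_ge0 h; lra.
have Kh : n1 (fun i => / n1 h * h i) = 1.
  rewrite -/(vscale (/ n1 h) h) n1_scale Rabs_right; last by apply: Rle_ge; apply: Rlt_le; apply: Rinv_0_lt_compat.
  by field.
have := Hhm _ Kh.
rewrite lincomb_scale n1_scale Rabs_right; last by apply: Rle_ge; apply: Rlt_le; apply: Rinv_0_lt_compat.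
move=> H; apply: (Rmult_le_reg_l (/ n1 h)); first exact: Rinv_0_lt_compat.
have -> : / n1 h * (n1 (lincomb hm J) * n1 h) = n1 (lincomb hm J) by field.
exact: H.
Qed.

Lemma vnorm_coord n (z : vec n) j : Rabs (z j) <= vnorm z.
Proof.
have := dist_coord z (fun _ => 0) j.
have -> : Defs.dist z (fun _ => 0) = vnorm z.
  by rewrite /Defs.dist; congr vnorm; apply: functional_extensionality => k; rewrite /vsub; ring.
by rewrite Rminus_0_r.
Qed.

Lemma proj_exists n r (J : 'I_r -> vec n) : (0 < r)%N -> lin_indep J ->
  forall b, exists c, forall i, dot (vsub b (lincomb c J)) (J i) = 0.
Proof.
move=> r0 LI b.
have [c0 [c00 Hc0]] := lc_lower r0 LI.
have Hn := pos_INR n; have HC := CJ_ge0 J.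
pose f c := dot (vsub b (lincomb c J)) (vsub b (lincomb c J)).
have Hvb : 0 <= vnorm b by apply: sqrt_pos.
pose M := (INR n * vnorm b + n1 b + 1) / c0.
have M0 : 0 < M by apply: Rdiv_lt_0_compat => //; have := n1_ge0 b; nra.
have f0 : f (fun _ => 0) = dot b b.
  rewrite /f lincomb_zero; congr dot; apply: functional_extensionality => j; rewrite /vsub; ring.
have [cs [Kcs Hcs]] : exists cs, (forall i, Rabs (cs i) <= M) /\
    forall c, (forall i, Rabs (c i) <= M) -> f cs <= f c.
  apply: (@evt_box _ (fun c => forall i, Rabs (c i) <= M) f).
  - by exists (fun _ => 0) => i; rewrite Rabs_R0; lra.
  - by exists M.
  - move=> z Hz i; apply: le_of_lt_eps => e e0.
    have [y [Ky Hy]] := Hz e e0.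
    have := Rabs_triang (z i - y i) (y i); have := Hy i; have := Ky i.
    have -> : z i - y i + y i = z i by ring.
    lra.
  - move=> x e e0.
    have [d1 [d10 Hd1]] := sqd_cont b (lincomb x J) e0.
    pose d := d1 / (CJ J + 1).
    have d0 : 0 < d by apply: Rdiv_lt_0_compat; lra.
    exists d; split => // y Hy; apply: Hd1 => j.
    apply: Rle_lt_trans (@lc_coord_bound _ _ J x y d (Rlt_le _ _ d0) (fun i => Rlt_le _ _ (Hy i)) j) _.
    have -> : d * CJ J = d1 * (CJ J / (CJ J + 1)) by rewrite /d; field; lra.
    have : CJ J / (CJ J + 1) < 1.
      apply: (Rmult_lt_reg_r (CJ J + 1)); first lra.
      rewrite /Rdiv Rmult_assoc Rinv_l; lra.
    have : 0 <= CJ J / (CJ J + 1) by apply: Rmult_le_pos => //; apply: Rlt_le; apply: Rinv_0_lt_compat; lra.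
    nra.
have Hglob : forall c, f cs <= f c.
  move=> c; case: (Classical_Prop.classic (forall i, Rabs (c i) <= M)) => [Hc|Hc]; first exact: Hcs.
  have [i Hi] := Classical_Pred_Type.not_all_ex_not _ _ Hc.
  have Hi' : M < Rabs (c i) by apply: Rnot_le_lt.
  have H1 : M < n1 c by apply: Rlt_le_trans Hi' (abs_le_n1 c i).
  have H2 := Hc0 c.
  have H3 : c0 * M = INR n * vnorm b + n1 b + 1 by rewrite /M; field; lra.
  set z := vsub b (lincomb c J).
  have H4' : n1 (lincomb c J) - n1 b <= n1 z.
    have := n1_diff (lincomb c J) b.
    have -> : n1 (vsub (lincomb c J) b) = n1 z.
      rewrite /n1 /z; apply: vsum_ext => j; rewrite /vsub -Rabs_Ropp; congr Rabs; ring.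
    move=> H; have := Rle_abs (n1 (lincomb c J) - n1 b); lra.
  have H5 : n1 z <= INR n * vnorm z by apply: n1_box => j; exact: vnorm_coord.
  have H6 : vnorm b < vnorm z.
    apply: Rnot_le_lt => Hle.
    have := Rmult_le_compat_l _ _ _ Hn Hle.
    nra.
  have K0 : forall i, Rabs ((fun _ : 'I_r => 0) i) <= M by move=> k; rewrite Rabs_R0; lra.
  have := Hcs _ K0; rewrite f0 => Hf.
  have Hsq : dot b b < dot z z.
    have Hb := dot_self_ge0 b; have Hz := dot_self_ge0 z.
    rewrite /vnorm in H6.
    apply: Rnot_le_lt => Hle; have := sqrt_le_1_alt _ _ Hle; lra.
  have Efc : f c = dot z z by []. lra.
exists cs => i.
set z := vsub b (lincomb cs J).
set a := dot z (J i).
set B := dot (J i) (J i).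
have HB : 0 <= B by apply: dot_self_ge0.
have Ht : forall t, 0 <= 2 * t * a + t * t * B.
  move=> t.
  have := Hglob (fun k => cs k + (- t) * ebasis i k).
  rewrite /f lincomb_add_basis.
  have -> : vsub b (vadd (lincomb cs J) (vscale (- t) (J i))) = vadd z (vscale t (J i)).
    apply: functional_extensionality => j; rewrite /z /vsub /vadd /vscale; ring.
  rewrite dot_add_self dot_scale_self dot_scaler -/z -/a -/B.
  lra.
have := Ht (- (a / (B + 1))).
set t := a / (B + 1).
have Ea : a = t * (B + 1) by rewrite /t; field; lra.
rewrite Ea => H.
have : t * t * (B + 2) <= 0 by nra.
have := Rle_0_sqr t; rewrite /Rsqr => Ht2 Ht3.
have : t * t = 0 by nra.
move=> Htt; have : t = 0 by nra.
move=> -> ; ring.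
Qed.

Lemma chart_tangent n r (L : vec n -> Prop) (V : vec r -> Prop) phi y0 (J : 'I_r -> vec n) :
  is_open V -> V y0 -> (forall y, V y -> L (phi y)) ->
  (forall i j, has_partial (fun y => phi y j) i y0 (J i j)) ->
  forall i, tangent_vec L (phi y0) (J i).
Proof.
move=> Vo Vy0 LV HJ i.
have [d [d0 Hd]] := Vo y0 Vy0.
exists (fun t => phi (vadd y0 (vscale t (ebasis i)))), d; split => //; split.
  by move=> t Ht; apply: LV; apply: Hd; rewrite dist_basis.
split; first by rewrite vadd_scale0.
move=> j; exact: HJ.
Qed.

Lemma gamma_lip n (gamma : R -> vec n) (v : vec n) :
  (forall j, derivable_pt_lim (fun t => gamma t j) 0 (v j)) ->
  exists d, 0 < d /\ forall t, Rabs t < d -> n1 (vsub (gamma t) (gamma 0)) <= (n1 v + INR n) * Rabs t.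
Proof.
move=> Hg.
have [d [d0 Hd]] : exists d, 0 < d /\ forall j t, Rabs t < d -> Rabs (gamma t j - gamma 0 j) <= (Rabs (v j) + 1) * Rabs t.
  apply: (fin_min (P := fun j d => forall t, Rabs t < d -> Rabs (gamma t j - gamma 0 j) <= (Rabs (v j) + 1) * Rabs t)).
    move=> j d d' Hd' H t Ht; apply: H; lra.
  move=> j; have [del Hdel] := Hg j 1 Rlt_0_1.
  exists del; split; first exact: cond_pos.
  move=> t Ht.
  have [->|tn] := Req_dec t 0.
    rewrite Rminus_diag Rabs_R0 Rmult_0_r; lra.
  have := Hdel t tn Ht; rewrite Rplus_0_l => H.
  have tp : 0 < Rabs t by apply: Rabs_pos_lt.
  have E : gamma t j - gamma 0 j = ((gamma t j - gamma 0 j) / t) * t by field.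
  rewrite E Rabs_mult; apply: Rmult_le_compat_r; first exact: Rabs_pos.
  have := Rabs_triang_inv ((gamma t j - gamma 0 j) / t) (v j); lra.
exists d; split => // t Ht.
rewrite /n1.
apply: Rle_trans (vsum_le (g := fun j => (Rabs (v j) + 1) * Rabs t) _) _.
  move=> j; exact: Hd.
rewrite (vsum_ext (g := fun j => Rabs t * Rabs (v j) + Rabs t * 1)); last by move=> j; ring.
rewrite vsum_add !vsum_scal vsum_const /n1; lra.
Qed.

Lemma phi_taylor n r (V : vec r -> Prop) (phi : vec r -> vec n) y0 (J : 'I_r -> vec n) :
  is_open V -> V y0 -> smooth_on V phi ->
  (forall i j, has_partial (fun y => phi y j) i y0 (J i j)) ->
  forall eps, 0 < eps -> exists del, 0 < del /\ forall y, (forall i, Rabs (y i - y0 i) < del) ->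
  forall j, Rabs (phi y j - phi y0 j - lincomb (vsub y y0) J j) <= eps * n1 (vsub y y0).
Proof.
move=> Vo Vy0 Sm HJ eps e0.
have Hex : forall j, exists d, 0 < d /\ forall y, (forall i, Rabs (y i - y0 i) < d) ->
  Rabs (phi y j - phi y0 j - lincomb (vsub y y0) J j) <= eps * n1 (vsub y y0).
  move=> j.
  have [_ [D [HD HDc]]] := Sm 1%N j.
  have [del [del0 Hdel]] := taylor1 Vo Vy0 HD HDc e0.
  exists del; split => // y Hy.
  have E : vsum (fun i => (y i - y0 i) * D i y0) = lincomb (vsub y y0) J j.
    rewrite /lincomb; apply: vsum_ext => i; rewrite /vsub; congr (_ * _).
    exact: (uniqueness_limite _ _ _ _ (HD i y0 Vy0) (HJ i j)).
  rewrite -E; exact: Hdel.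
have [d [d0 Hd]] := fin_min (P := fun j d => forall y, (forall i, Rabs (y i - y0 i) < d) ->
  Rabs (phi y j - phi y0 j - lincomb (vsub y y0) J j) <= eps * n1 (vsub y y0))
  (fun j d d' Hd' H y Hy => H y (fun i => Rlt_le_trans _ _ _ (Hy i) (proj2 Hd'))) Hex.
by exists d; split => // y Hy j; exact: Hd.
Qed.

Lemma tangent_perp n r (L : vec n -> Prop) (W : vec n -> Prop) (V : vec r -> Prop) phi psi y0
    (J : 'I_r -> vec n) v w :
  (0 < r)%N -> is_open W -> W (phi y0) -> is_open V -> V y0 -> smooth_on V phi ->
  (forall x, L x -> W x -> V (psi x) /\ phi (psi x) = x) ->
  cont_on (fun x => L x /\ W x) psi -> psi (phi y0) = y0 -> L (phi y0) ->
  (forall i j, has_partial (fun y => phi y j) i y0 (J i j)) -> lin_indep J ->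
  tangent_vec L (phi y0) v -> (forall i, dot (J i) w = 0) -> dot v w = 0.
Proof.
move=> r0 Wo Wq Vo Vy0 Sm Hpsi Cpsi psiq Lq HJ LI [gamma [eg [eg0 [Lg [g0 Hg]]]]] Jw.
set q := phi y0 in Wq psiq Lq g0 *.
have [c0 [c00 Hc0]] := lc_lower r0 LI.
have Hn := pos_INR n.
pose A := n1 v + INR n.
have A0 : 0 <= A by rewrite /A; have := n1_ge0 v; lra.
have Hw := n1_ge0 w.
pose K := 2 / c0 * A * n1 w.
have K0 : 0 <= K.
  rewrite /K; apply: Rmult_le_pos => //; apply: Rmult_le_pos => //.
  apply: Rlt_le; apply: Rdiv_lt_0_compat; lra.
have Hf : derivable_pt_lim (fun t => dot (gamma t) w) 0 (dot v w) by exact: dpl_dot.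
have [dg [dg0 Hdg]] := gamma_lip Hg.
rewrite g0 in Hdg.
have main : forall eps, 0 < eps -> INR n * eps <= c0 / 2 -> Rabs (dot v w) <= eps * K.
  move=> eps e0 Heps.
  have [dT [dT0 HT]] := phi_taylor Vo Vy0 Sm HJ e0.
  have [dpsi [dpsi0 Hdpsi]] := Cpsi q (conj Lq Wq) dT dT0.
  have [dW [dW0 HW]] := Wo q Wq.
  pose m := Rmin dpsi dW.
  have m0 : 0 < m by apply: Rmin_glb_lt.
  have m1 : m <= dpsi := Rmin_l dpsi dW. have m2 : m <= dW := Rmin_r dpsi dW.
  pose del := Rmin (Rmin eg dg) (m / (A + 1)).
  have del0 : 0 < del.
    apply: Rmin_glb_lt; first by apply: Rmin_glb_lt.
    apply: Rdiv_lt_0_compat; lra.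
  have dl1 : del <= Rmin eg dg := Rmin_l _ _. have dl2 : del <= m / (A + 1) := Rmin_r _ _.
  have dl3 := Rmin_l eg dg; have dl4 := Rmin_r eg dg.
  apply: (dpl_bound Hf del0) => t Ht tn.
  have Hteg : Rabs t < eg by lra.
  have Htdg : Rabs t < dg by lra.
  set x := gamma t.
  have Lx : L x := Lg t Hteg.
  have Hxq : n1 (vsub x q) <= A * Rabs t := Hdg t Htdg.
  have Hdist : Defs.dist q x < m.
    rewrite dist_sym; apply: Rle_lt_trans (dist_le_n1 _ _) _.
    apply: Rle_lt_trans Hxq _.
    have : Rabs t * (A + 1) < m.
      have := Rmult_lt_compat_r (A + 1) _ _ ltac:(lra) (Rlt_le_trans _ _ _ Ht dl2).
      by rewrite /Rdiv Rmult_assoc Rinv_l; lra.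
    have := Rabs_pos t; nra.
  have Wx : W x by apply: HW; lra.
  have [Vy Ey] := Hpsi x Lx Wx.
  set y := psi x in Vy Ey.
  have Hy : forall i, Rabs (y i - y0 i) < dT.
    move=> i; apply: Rle_lt_trans (dist_coord _ _ i) _.
    rewrite dist_sym -{1}psiq; apply: Hdpsi; [by split|lra].
  have HTy := HT y Hy.
  rewrite Ey in HTy.
  set h := vsub y y0 in HTy.
  set E := vsub (vsub x q) (lincomb h J).
  have HE : forall j, Rabs (E j) <= eps * n1 h by move=> j; exact: HTy.
  have Hlc : n1 (lincomb h J) <= n1 (vsub x q) + INR n * (eps * n1 h).
    have -> : lincomb h J = vsub (vsub x q) E.
      by apply: functional_extensionality => j; rewrite /E /vsub; ring.
    have := n1_box HE.
    have : n1 (vsub (vsub x q) E) <= n1 (vsub x q) + n1 E.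
      rewrite /n1 -vsum_add; apply: vsum_le => j; rewrite /vsub.
      have -> : x j - q j - E j = (x j - q j) + - E j by ring.
      apply: Rle_trans (Rabs_triang _ _) _; rewrite Rabs_Ropp; lra.
    lra.
  have Hh : n1 h <= 2 / c0 * n1 (vsub x q).
    have := Hc0 h; have Hnh := n1_ge0 h.
    move=> H1.
    have H2 : c0 / 2 * n1 h <= n1 (vsub x q).
      have : INR n * (eps * n1 h) <= c0 / 2 * n1 h.
        rewrite -Rmult_assoc; apply: Rmult_le_compat_r => //.
      lra.
    apply: (Rmult_le_reg_l (c0 / 2)); first lra.
    have -> : c0 / 2 * (2 / c0 * n1 (vsub x q)) = n1 (vsub x q) by field; lra.
    exact: H2.
  have Hdot : dot (vsub x q) w = dot E w.
    have -> : vsub x q = vadd (lincomb h J) E.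
      by apply: functional_extensionality => j; rewrite /E /vadd /vsub; ring.
    rewrite dot_addl dot_lincomb.
    rewrite (vsum_ext (g := fun _ => 0)); last by move=> i; rewrite Jw; ring.
    rewrite vsum_zero; ring.
  have -> : dot (gamma t) w - dot (gamma 0) w = dot E w by rewrite -Hdot dot_subl g0.
  apply: Rle_trans (dot_abs_le _ HE) _.
  rewrite /K.
  have Hnh := n1_ge0 h.
  have : eps * n1 h * n1 w <= eps * (2 / c0 * (A * Rabs t)) * n1 w.
    apply: Rmult_le_compat_r => //; apply: Rmult_le_compat_l; first lra.
    apply: Rle_trans Hh _; apply: Rmult_le_compat_l => //.
    apply: Rlt_le; apply: Rdiv_lt_0_compat; lra.
  move=> H; apply: Rle_trans H _; right; ring.
have Hfin : Rabs (dot v w) <= 0.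
  apply: le_of_lt_eps => eta eta0.
  pose eps := Rmin (c0 / (2 * (INR n + 1))) (eta / (K + 1)).
  have e0 : 0 < eps.
    apply: Rmin_glb_lt; apply: Rdiv_lt_0_compat; lra.
  have e1 : eps <= c0 / (2 * (INR n + 1)) := Rmin_l _ _.
  have e2 : eps <= eta / (K + 1) := Rmin_r _ _.
  have Hne : INR n * eps <= c0 / 2.
    apply: Rle_trans (Rmult_le_compat_l _ _ _ Hn e1) _.
    have -> : INR n * (c0 / (2 * (INR n + 1))) = c0 / 2 * (INR n / (INR n + 1)) by field; lra.
    have : INR n / (INR n + 1) <= 1.
      apply: (Rmult_le_reg_r (INR n + 1)); first lra.
      rewrite /Rdiv Rmult_assoc Rinv_l; lra.
    have : 0 <= INR n / (INR n + 1) by apply: Rmult_le_pos => //; apply: Rlt_le; apply: Rinv_0_lt_compat; lra.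
    nra.
  have := main eps e0 Hne.
  have : eps * K < eta.
    have Hk : eps * K <= eta / (K + 1) * K by apply: Rmult_le_compat_r.
    have : eta / (K + 1) * K < eta.
      have -> : eta / (K + 1) * K = eta * (K / (K + 1)) by field; lra.
      have : K / (K + 1) < 1.
        apply: (Rmult_lt_reg_r (K + 1)); first lra.
        rewrite /Rdiv Rmult_assoc Rinv_l; lra.
      nra.
    lra.
  lra.
have := Rabs_pos (dot v w).
move=> H0; have : Rabs (dot v w) = 0 by lra.
move=> Ha; apply: Classical_Prop.NNPP => Hne; exact: (Rabs_no_R0 _ Hne Ha).
Qed.

Lemma flat_tangent n (L : vec n -> Prop) q2 u p v :
  (forall y, L y -> dot (vsub y q2) u = 0) -> tangent_vec L p v -> dot v u = 0.
Proof.
move=> Hf [gamma [eps [e0 [Lg [g0 Hg]]]]].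
have Hd := dpl_dot u Hg.
have : Rabs (dot v u) <= 0.
  apply: (dpl_bound Hd e0) => t Ht tn.
  have E : dot (gamma t) u - dot (gamma 0) u = dot (vsub (gamma t) q2) u - dot (vsub (gamma 0) q2) u.
    rewrite !dot_subl; ring.
  rewrite E !Hf; [|apply: Lg; rewrite Rabs_R0 //|exact: Lg].
  rewrite Rminus_diag Rabs_R0; lra.
move=> H; have := Rabs_pos (dot v u); move=> H0; have Ha : Rabs (dot v u) = 0 by lra.
apply: Classical_Prop.NNPP => Hne; exact: (Rabs_no_R0 _ Hne Ha).
Qed.

Theorem theorem1p16 (n r : nat) (L : vec n -> Prop) :
  (1 <= r)%N -> (r <= n - 1)%N ->
  (exists p, L p) ->
  regular_surface r L ->
  is_closed L ->
  (forall p q, L p -> L q -> p <> q ->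
     ~ (exists x, normal_plane L p x /\ normal_plane L q x)) ->
  affine_plane r L.
Proof.
move=> r1 _ Lne RS Lcl Hd.
have Hd' : disjoint_normals L := Hd.
have [p Lp] := Lne.
have [W [V [phi [psi [Wo [Wp [Vo [Sm [Imm [H1 [H2 Cpsi]]]]]]]]]]] := RS p Lp.
have [Vy0 Ephi] := H2 p Lp Wp.
set y0 := psi p in Vy0 Ephi.
have [J [HJ LI]] := Imm y0 Vy0.
have r0 : (0 < r)%N by [].
have HT : forall i, tangent_vec L p (J i).
  move=> i; rewrite -Ephi; apply: (chart_tangent Vo Vy0) => // y Vy; exact: (proj1 (proj2 (H1 y Vy))).
have Hperp : forall w, (forall i, dot (J i) w = 0) -> forall v, tangent_vec L p v -> dot w v = 0.
  move=> w Jw v Hv; rewrite dot_comm.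
  have psiq : psi (phi y0) = y0 by rewrite Ephi.
  rewrite -Ephi in Hv.
  apply: (tangent_perp (W := W) (V := V) (psi := psi) r0 Wo _ Vo Vy0 Sm H2 Cpsi psiq _ HJ LI Hv Jw).
    by rewrite Ephi.
  by rewrite Ephi.
exists p, J; split => // x; split.
- move=> Lx.
  have [c Hc] := proj_exists r0 LI (vsub x p).
  set w := vsub (vsub x p) (lincomb c J) in Hc.
  have Jw : forall i, dot (J i) w = 0 by move=> i; rewrite dot_comm Hc.
  have Hxw : dot (vsub x p) w = 0 := normal_flat Lcl Lne Hd' Lp (Hperp w Jw) Lx.
  have Hlw : dot (lincomb c J) w = 0.
    rewrite dot_lincomb (vsum_ext (g := fun _ => 0)); first exact: vsum_zero.
    by move=> i; rewrite Jw; ring.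
  have Hww : dot w w = 0 by rewrite {1}/w dot_subl Hxw Hlw; ring.
  have := dot_self_eq0 Hww => Hw0.
  exists c; apply: functional_extensionality => j.
  have := congr1 (fun f => f j) Hw0; rewrite /w /vsub /vadd /=; lra.
- move=> [c ->].
  set z := vadd p (lincomb c J).
  have [q2 [Lq2 Hq2]] := nearest z Lne Lcl.
  have Nq2 := nearest_normal Lq2 Hq2.
  set u := vsub z q2.
  have Hflat := normal_flat Lcl Lne Hd' Lq2 (fun v Hv => Nq2 v Hv).
  rewrite -/u in Hflat.
  have Hpu : dot (vsub p q2) u = 0 := Hflat p Lp.
  have Hlu : dot (lincomb c J) u = 0.
    rewrite dot_lincomb (vsum_ext (g := fun _ => 0)); first exact: vsum_zero.
    by move=> i; rewrite (flat_tangent Hflat (HT i)); ring.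
  have Huu : dot u u = 0.
    have Eu : u = vadd (lincomb c J) (vsub p q2).
      by apply: functional_extensionality => j; rewrite /u /z /vsub /vadd; ring.
    by rewrite {1}Eu dot_addl Hlu Hpu; ring.
  have := vsub_eq0 Huu => ->; exact: Lq2.
Qed.
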